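(* Let $G=(V,E)$ be a connected graph and $\Theta:E\to[0,\pi/2]$. Suppose that $P$ is a disk pattern in $\mathbb{C}$ which realizes $(G,\Theta)$. If $P$ is locally finite in $\mathbb{C}$, then $G$ is VEL-parabolic.
   Context: A disk pattern in $\mathbb{C}$ is a collection of closed round disks in $\mathbb{C}$ in which no disk has its boundary contained in the union of two other disks and no disk is the Hausdorff limit of a sequence of distinct disks. Its contact graph has one vertex per disk, with an edge when the disks intersect. The dihedral angle of two intersecting disks $D_1,D_2$ is the angle in $[0,\pi)$ between the clockwise tangent of $\partial D_1$ and the counterclockwise tangent of $\partial D_2$ at a point of $\partial D_1\cap\partial D_2$. Let $\tilde G$ be obtained from $G$ by adding the edge $[v_1,v_3]$ (if not present) whenever $v_0,v_1,v_2,v_3$ form a simple loop with $\Theta([v_{i-1},v_i])=\pi/2$, $i=1,\dots,4$ ($v_4=v_0$), and $\Theta([v_0,v_2])=0$; $\tilde\Theta=\Theta$ on $E$ and $0$ on added edges. A pattern $P=\{P(v)\}_{v\in V}$ realizes $(G,\Theta)$ if its contact graph is (via $v\mapsto P(v)$) isomorphic to $\tilde G$ with dihedral angles $\tilde\Theta$. Locally finite in $\mathbb{C}$: each compact subset of $\mathbb{C}$ meets only finitely many disks. Vertex extremal length: a vertex metric is $\eta:V\to[0,\infty)$, with area $\sum_v\eta(v)^2$; a vertex curve $\gamma\subseteq V$ has length $\sum_{v\in\gamma}\eta(v)$. For a family $\Gamma$ of vertex curves, $\eta$ is admissible if every $\gamma\in\Gamma$ has length $\ge1$; $\mathrm{MOD}(\Gamma)$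 is the infimum of areas of admissible metrics and $\mathrm{VEL}(\Gamma)=1/\mathrm{MOD}(\Gamma)$ ($+\infty$ if $\Gamma$ is empty). A path is a finite or infinite sequence of vertices with consecutive ones adjacent in $G$, identified with its vertex set. For nonvoid $V_1$, a path joining $V_1$ and $\infty$ starts at a vertex of $V_1$ and passes through infinitely many vertices; $\mathrm{VEL}(V_1,\infty)$ is the VEL of the family of such paths. A connected graph is VEL-parabolic if $\mathrm{VEL}(V_0,\infty)=\infty$ for a (equivalently any) finite nonvoid $V_0\subseteq V$. *)

(* Defs.v *)
From Stdlib Require Import Reals List Classical ClassicalEpsilon.
From Coquelicot Require Import Rbar Lub.
Open Scope R_scope.

Definition pt := (R * R)%type.

Definition dist2 (z w : pt) : R :=
  sqrt ((fst z - fst w) ^ 2 + (snd z - snd w) ^ 2).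

Definition open2 (O : pt -> Prop) : Prop :=
  forall z, O z -> exists eps, 0 < eps /\ forall w, dist2 z w < eps -> O w.

Definition compact2 (K : pt -> Prop) : Prop :=
  forall (I : Type) (U : I -> pt -> Prop),
    (forall i, open2 (U i)) ->
    (forall z, K z -> exists i, U i z) ->
    exists l : list I, forall z, K z -> exists i, In i l /\ U i z.

(* Closed round disks: a center and a radius (the radius is required
   to be positive in [disk_pattern]).                                 *)
Record disk := Disk { dcenter : pt; dradius : R }.

Definition in_disk (D : disk) (z : pt) : Prop := dist2 z (dcenter D) <= dradius D.
Definition on_circle (D : disk) (z : pt) : Prop := dist2 z (dcenter D) = dradius D.

Definition disks_meet (D1 D2 : disk) : Prop := exists z, in_disk D1 z /\ in_disk D2 z.

Definition cw_tangent (D : disk) (z : pt) : pt :=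
  ((snd z - snd (dcenter D)) / dradius D, - (fst z - fst (dcenter D)) / dradius D).
Definition ccw_tangent (D : disk) (z : pt) : pt :=
  (- (snd z - snd (dcenter D)) / dradius D, (fst z - fst (dcenter D)) / dradius D).

Definition dot (u w : pt) : R := fst u * fst w + snd u * snd w.

(* [dihedral_angle D1 D2 th]: th in [0,pi) is the angle between the clockwise
   unit tangent of bd D1 and the counterclockwise unit tangent of bd D2 at a
   point of bd D1 /\ bd D2 (angle between unit vectors u,w in [0,pi] is the
   unique th with cos th = u.w). *)
Definition dihedral_angle (D1 D2 : disk) (th : R) : Prop :=
  0 <= th < PI /\
  exists z, on_circle D1 z /\ on_circle D2 z /\
            cos th = dot (cw_tangent D1 z) (ccw_tangent D2 z).

Definition hausdorff_cvg (A : nat -> pt -> Prop) (B : pt -> Prop) : Prop :=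
  forall eps, 0 < eps -> exists N, forall n, (N <= n)%nat ->
    (forall x, A n x -> exists y, B y /\ dist2 x y < eps) /\
    (forall y, B y -> exists x, A n x /\ dist2 x y < eps).

(* Disk patterns, given as an indexed family P : V -> disk (the collection
   is the image of P).                                                   *)
Definition disk_pattern {V : Type} (P : V -> disk) : Prop :=
  (forall v, 0 < dradius (P v)) /\
  (forall v w1 w2, P w1 <> P v -> P w2 <> P v ->
     ~ (forall z, on_circle (P v) z -> in_disk (P w1) z \/ in_disk (P w2) z)) /\
  (forall v (s : nat -> V),
     (forall m n, m <> n -> P (s m) <> P (s n)) ->
     ~ hausdorff_cvg (fun n => in_disk (P (s n))) (in_disk (P v))).

Definition simple_graph {V : Type} (adj : V -> V -> Prop) : Prop :=
  (forall u v, adj u v -> adj v u) /\ (forall v, ~ adj v v).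

Inductive gpath {V : Type} (adj : V -> V -> Prop) : V -> V -> Prop :=
| gpath_refl : forall v, gpath adj v v
| gpath_step : forall u v w, adj u v -> gpath adj v w -> gpath adj u w.

Definition connected_graph {V : Type} (adj : V -> V -> Prop) : Prop :=
  forall u v, gpath adj u v.

(* Theta : E -> R, given on ordered pairs, symmetric on edges *)
Definition edge_weight {V : Type} (adj : V -> V -> Prop) (Th : V -> V -> R) : Prop :=
  forall u v, adj u v -> Th u v = Th v u.

(* The augmented graph G~ : add [v1,v3] when v0 v1 v2 v3 is a simple loop with
   all four angles pi/2 and [v0,v2] is an edge with angle 0. *)
Definition added_edge {V : Type} (adj : V -> V -> Prop) (Th : V -> V -> R)
  (v1 v3 : V) : Prop :=
  exists v0 v2,
    v0 <> v1 /\ v0 <> v2 /\ v0 <> v3 /\ v1 <> v2 /\ v1 <> v3 /\ v2 <> v3 /\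
    adj v0 v1 /\ adj v1 v2 /\ adj v2 v3 /\ adj v3 v0 /\
    Th v0 v1 = PI / 2 /\ Th v1 v2 = PI / 2 /\ Th v2 v3 = PI / 2 /\ Th v3 v0 = PI / 2 /\
    adj v0 v2 /\ Th v0 v2 = 0.

Definition adjt {V : Type} (adj : V -> V -> Prop) (Th : V -> V -> R) (u v : V) : Prop :=
  adj u v \/ added_edge adj Th u v.

Definition Tht {V : Type} (adj : V -> V -> Prop) (Th : V -> V -> R) (u v : V) : R :=
  match excluded_middle_informative (adj u v) with
  | left _ => Th u v
  | right _ => 0
  end.

(* P realizes (G,Theta): v |-> P v is an isomorphism from G~ onto the contact
   graph of P, with dihedral angles Theta~. *)
Definition realizes {V : Type} (adj : V -> V -> Prop) (Th : V -> V -> R)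
  (P : V -> disk) : Prop :=
  (forall u v, P u = P v -> u = v) /\
  (forall u v, u <> v -> (disks_meet (P u) (P v) <-> adjt adj Th u v)) /\
  (forall u v, adjt adj Th u v -> dihedral_angle (P u) (P v) (Tht adj Th u v)).

Definition finite_set {V : Type} (S : V -> Prop) : Prop :=
  exists l : list V, forall v, S v -> In v l.

Definition locally_finite {V : Type} (P : V -> disk) : Prop :=
  forall K, compact2 K -> finite_set (fun v => exists z, K z /\ in_disk (P v) z).

Definition sum_over {V : Type} (S : V -> Prop) (f : V -> R) : Rbar :=
  Lub_Rbar (fun s => exists l : list V,
    NoDup l /\ (forall v, In v l -> S v) /\
    s = fold_right (fun v acc => f v + acc) 0 l).

Definition vertex_metric {V : Type} (eta : V -> R) : Prop := forall v, 0 <= eta v.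

Definition area {V : Type} (eta : V -> R) : Rbar :=
  sum_over (fun _ => True) (fun v => eta v ^ 2).

(* a vertex curve is a set of vertices *)
Definition vlength {V : Type} (eta : V -> R) (gam : V -> Prop) : Rbar :=
  sum_over gam eta.

Definition admissible {V : Type} (Gam : (V -> Prop) -> Prop) (eta : V -> R) : Prop :=
  vertex_metric eta /\ forall gam, Gam gam -> Rbar_le (Finite 1) (vlength eta gam).

Definition MOD {V : Type} (Gam : (V -> Prop) -> Prop) : Rbar :=
  Glb_Rbar (fun a => exists eta, admissible Gam eta /\ area eta = Finite a).

(* VEL = 1/MOD, with 1/0 = +oo and 1/(+oo) = 0; VEL = +oo if Gam is empty *)
Definition VEL {V : Type} (Gam : (V -> Prop) -> Prop) : Rbar :=
  match excluded_middle_informative (exists gam, Gam gam) with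
  | right _ => p_infty
  | left _ =>
    match MOD Gam with
    | Finite m =>
        match Req_dec_T m 0 with
        | left _ => p_infty
        | right _ => Finite (/ m)
        end
    | p_infty => Finite 0
    | m_infty => p_infty
    end
  end.

Definition infinite_set {V : Type} (S : V -> Prop) : Prop := ~ finite_set S.

Definition paths_to_infinity {V : Type} (adj : V -> V -> Prop) (V1 : V -> Prop)
  (gam : V -> Prop) : Prop :=
  exists f : nat -> V,
    V1 (f O) /\ (forall n, adj (f n) (f (S n))) /\
    infinite_set (fun v => exists n, f n = v) /\
    (forall v, gam v <-> exists n, f n = v).

Definition VEL_to_infinity {V : Type} (adj : V -> V -> Prop) (V1 : V -> Prop) : Rbar :=
  VEL (paths_to_infinity adj V1).

(* VEL(V0, oo) = oo for every finite nonvoid V0 (equivalent, for connected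
   graphs, to "for some finite nonvoid V0") *)
Definition VEL_parabolic {V : Type} (adj : V -> V -> Prop) : Prop :=
  connected_graph adj /\
  forall V0 : V -> Prop, finite_set V0 -> (exists v, V0 v) ->
    VEL_to_infinity adj V0 = p_infty.

(* Main.v *)
Require Import Defs.
From Stdlib Require Import Reals Lra Lia List Classical ClassicalEpsilon ZArith.
From Coquelicot Require Import Rbar Lub Compactness.
Open Scope R_scope.

Definition ind (P : Prop) : R :=
  if excluded_middle_informative P then 1 else 0.

Lemma ind_01 P : 0 <= ind P <= 1.
Proof. unfold ind; destruct excluded_middle_informative; lra. Qed.
Lemma ind_T (P : Prop) : P -> ind P = 1.
Proof. unfold ind; destruct excluded_middle_informative; tauto. Qed.
Lemma ind_F (P : Prop) : ~ P -> ind P = 0.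
Proof. unfold ind; destruct excluded_middle_informative; tauto. Qed.
Lemma ind_sq P : ind P ^ 2 = ind P.
Proof. unfold ind; destruct excluded_middle_informative; ring. Qed.

Lemma sum_sq_nonneg x y : 0 <= x ^ 2 + y ^ 2.
Proof. generalize (pow2_ge_0 x) (pow2_ge_0 y); lra. Qed.

Lemma div_nonneg a b : 0 <= a -> 0 < b -> 0 <= a / b.
Proof. intros; unfold Rdiv; apply Rmult_le_pos; [lra | left; apply Rinv_0_lt_compat; lra]. Qed.

Definition nrm (z : pt) : R := sqrt (fst z ^ 2 + snd z ^ 2).

Lemma sqrt_le_iff S r : 0 <= S -> 0 <= r -> (sqrt S <= r <-> S <= r ^ 2).
Proof.
  intros HS Hr; split; intro H.
  - assert (H1 : sqrt S ^ 2 <= r ^ 2) by (apply pow_incr; split; [apply sqrt_pos| exact H]).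
    rewrite pow2_sqrt in H1; lra.
  - rewrite <- (sqrt_pow2 r Hr). apply sqrt_le_1_alt; lra.
Qed.

Lemma sq_eq_of_sqrt S r : 0 <= S -> sqrt S = r -> S = r ^ 2.
Proof. intros HS H; subst; rewrite pow2_sqrt; auto. Qed.

Lemma tri2 x1 y1 x2 y2 :
  sqrt ((x1 + x2) ^ 2 + (y1 + y2) ^ 2) <= sqrt (x1 ^ 2 + y1 ^ 2) + sqrt (x2 ^ 2 + y2 ^ 2).
Proof.
  set (A := sqrt (x1 ^ 2 + y1 ^ 2)). set (B := sqrt (x2 ^ 2 + y2 ^ 2)).
  assert (HA : 0 <= A) by apply sqrt_pos. assert (HB : 0 <= B) by apply sqrt_pos.
  assert (HA2 : A ^ 2 = x1 ^ 2 + y1 ^ 2) by (apply pow2_sqrt; apply sum_sq_nonneg).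
  assert (HB2 : B ^ 2 = x2 ^ 2 + y2 ^ 2) by (apply pow2_sqrt; apply sum_sq_nonneg).
  apply sqrt_le_iff; [apply sum_sq_nonneg | lra |].
  assert (CS : (x1 * x2 + y1 * y2) <= A * B).
  { destruct (Rle_lt_dec (x1 * x2 + y1 * y2) 0) as [h|h]. nra.
    assert (h2 : (x1 * x2 + y1 * y2) ^ 2 <= (A * B) ^ 2).
    { replace ((A * B) ^ 2) with (A ^ 2 * B ^ 2) by ring. rewrite HA2, HB2.
      assert (0 <= (x1 * y2 - x2 * y1) ^ 2) by (apply pow2_ge_0).
      assert (E : (x1 ^ 2 + y1 ^ 2) * (x2 ^ 2 + y2 ^ 2) = (x1 * x2 + y1 * y2) ^ 2 + (x1 * y2 - x2 * y1) ^ 2) by ring.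
      lra. }
    destruct (Rle_lt_dec (x1 * x2 + y1 * y2) (A * B)) as [h3|h3]; [exact h3|].
    assert (0 <= A * B) by nra.
    set (s := x1 * x2 + y1 * y2) in *. set (AB := A * B) in *.
    assert (AB * AB < s * s) by nra.
    replace (s ^ 2) with (s * s) in h2 by ring. replace (AB ^ 2) with (AB * AB) in h2 by ring. lra. }
  nra.
Qed.

Lemma abs_le_nrm x y : Rabs x <= sqrt (x ^ 2 + y ^ 2).
Proof.
  rewrite <- (sqrt_pow2 (Rabs x)) by apply Rabs_pos. apply sqrt_le_1_alt.
  rewrite <- Rsqr_pow2, <- Rsqr_abs, Rsqr_pow2. nra.
Qed.

Lemma nrm_le_abs x y : sqrt (x ^ 2 + y ^ 2) <= Rabs x + Rabs y.
Proof.
  apply sqrt_le_iff; [apply sum_sq_nonneg | generalize (Rabs_pos x) (Rabs_pos y); lra |].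
  rewrite <- (Rsqr_pow2 x), (Rsqr_abs x), <- (Rsqr_pow2 y), (Rsqr_abs y).
  unfold Rsqr. generalize (Rabs_pos x) (Rabs_pos y); nra.
Qed.

Lemma nrm_scale l x y : 0 <= l -> sqrt ((l * x) ^ 2 + (l * y) ^ 2) = l * sqrt (x ^ 2 + y ^ 2).
Proof.
  intro Hl. replace ((l * x) ^ 2 + (l * y) ^ 2) with (l ^ 2 * (x ^ 2 + y ^ 2)) by ring.
  rewrite sqrt_mult_alt by nra. rewrite sqrt_pow2 by lra. reflexivity.
Qed.

Lemma dist2_sym z w : dist2 z w = dist2 w z.
Proof. unfold dist2. f_equal. ring. Qed.

Lemma dist2_tri z w u : dist2 z u <= dist2 z w + dist2 w u.
Proof.
  unfold dist2.
  replace (fst z - fst u) with ((fst z - fst w) + (fst w - fst u)) by ring.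
  replace (snd z - snd u) with ((snd z - snd w) + (snd w - snd u)) by ring.
  apply tri2.
Qed.

Lemma nrm_dist z : nrm z = dist2 z (0,0).
Proof. unfold nrm, dist2; simpl. f_equal; ring. Qed.

Lemma dist2_pos z w : 0 <= dist2 z w.
Proof. apply sqrt_pos. Qed.

Lemma dist2_sq z w : dist2 z w ^ 2 = (fst z - fst w) ^ 2 + (snd z - snd w) ^ 2.
Proof. unfold dist2; apply pow2_sqrt; apply sum_sq_nonneg. Qed.

Lemma shrink_pt (c : pt) t : 0 <= t < nrm c ->
  let l := (nrm c - t) / nrm c in
  dist2 (l * fst c, l * snd c) c = t /\ nrm (l * fst c, l * snd c) = nrm c - t.
Proof.
  intros [Ht Hlt] l.
  assert (Hn : 0 < nrm c) by lra.
  assert (Hl0 : 0 <= l) by (unfold l; apply div_nonneg; lra).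
  assert (Hl1 : 1 - l = t / nrm c) by (unfold l; field; lra).
  split.
  - unfold dist2; cbn [fst snd].
    replace (l * fst c - fst c) with ((1 - l) * fst c * (-1)) by ring.
    replace (l * snd c - snd c) with ((1 - l) * snd c * (-1)) by ring.
    replace (((1 - l) * fst c * -1) ^ 2 + ((1 - l) * snd c * -1) ^ 2)
      with (((1 - l) * fst c) ^ 2 + ((1 - l) * snd c) ^ 2) by ring.
    rewrite nrm_scale by (rewrite Hl1; apply div_nonneg; lra).
    fold (nrm c). rewrite Hl1. field. lra.
  - unfold nrm at 1; cbn [fst snd]. rewrite nrm_scale by lra. fold (nrm c). unfold l. field. lra.
Qed.

Section Sums.
Context {V : Type}.
Definition lsum (f : V -> R) (l : list V) : R := fold_right (fun v acc => f v + acc) 0 l.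

Lemma lsum_nonneg f l : (forall v, In v l -> 0 <= f v) -> 0 <= lsum f l.
Proof. induction l as [|x l IH]; simpl; intros H; [lra|]. 
  assert (0 <= f x) by auto. assert (0 <= lsum f l) by auto. lra. Qed.
Lemma lsum_le f g l : (forall v, In v l -> f v <= g v) -> lsum f l <= lsum g l.
Proof. induction l as [|x l IH]; simpl; intros H; [lra|].
  assert (f x <= g x) by auto. assert (lsum f l <= lsum g l) by auto. lra. Qed.
Lemma lsum_scal c f l : lsum (fun v => c * f v) l = c * lsum f l.
Proof. induction l as [|x l IH]; simpl; [ring|]. rewrite IH; ring. Qed.
Lemma lsum_ext f g l : (forall v, In v l -> f v = g v) -> lsum f l = lsum g l.
Proof. induction l as [|x l IH]; simpl; intros H; [lra|]. rewrite H, IH; auto. Qed.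
End Sums.

Fixpoint sumN (n : nat) (g : nat -> R) : R :=
  match n with O => 0 | S k => sumN k g + g k end.

Lemma sumN_ext n f g : (forall i, (i < n)%nat -> f i = g i) -> sumN n f = sumN n g.
Proof. induction n; simpl; intros H; [lra|]. rewrite IHn, H; auto. Qed.
Lemma sumN_le n f g : (forall i, (i < n)%nat -> f i <= g i) -> sumN n f <= sumN n g.
Proof. induction n; simpl; intros H; [lra|].
  assert (f n <= g n) by auto. assert (sumN n f <= sumN n g) by auto. lra. Qed.
Lemma sumN_nonneg n f : (forall i, (i < n)%nat -> 0 <= f i) -> 0 <= sumN n f.
Proof. intros H. replace 0 with (sumN n (fun _ => 0)). apply sumN_le; auto.
  induction n; simpl; auto. rewrite IHn; auto. ring. Qed.
Lemma sumN_scal c n f : sumN n (fun i => c * f i) = c * sumN n f.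
Proof. induction n; simpl; [ring|]. rewrite IHn; ring. Qed.
Lemma sumN_plus n f g : sumN n (fun i => f i + g i) = sumN n f + sumN n g.
Proof. induction n; simpl; [ring|]. rewrite IHn; ring. Qed.
Lemma sumN_const n c : sumN n (fun _ => c) = INR n * c.
Proof. induction n; simpl sumN; [simpl; ring|]. rewrite IHn, S_INR; ring. Qed.
Lemma sumN_zero n f : (forall i, (i < n)%nat -> f i = 0) -> sumN n f = 0.
Proof. intros H. rewrite (sumN_ext n f (fun _ => 0)) by auto. rewrite sumN_const; ring. Qed.

Lemma sumN_prod n m f g :
  sumN n f * sumN m g = sumN n (fun i => sumN m (fun j => f i * g j)).
Proof. induction n; simpl; [ring|]. rewrite <- IHn. rewrite sumN_scal. ring. Qed.

Lemma swap_lsum_sumN {V : Type} n (g : V -> nat -> R) l :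
  lsum (fun v => sumN n (fun i => g v i)) l = sumN n (fun i => lsum (fun v => g v i) l).
Proof.
  induction l as [|x l IH]; simpl.
  - symmetry; apply sumN_zero; auto.
  - rewrite IH. rewrite <- sumN_plus. reflexivity.
Qed.

Lemma sq_disjoint n x :
  (forall i j, (i < n)%nat -> (j < n)%nat -> i <> j -> x i = 0 \/ x j = 0) ->
  (sumN n x) ^ 2 = sumN n (fun i => x i ^ 2).
Proof.
  induction n; intros H; cbn [sumN]; [ring|].
  rewrite <- IHn by (intros; apply H; lia).
  destruct (Req_dec (x n) 0) as [E|E].
  - rewrite E. ring.
  - rewrite (sumN_zero n x). ring.
    intros i Hi. destruct (H i n) as [h|h]; try lia; tauto.
Qed.

Lemma sumN_lb n c g : (forall i, (i < n)%nat -> c <= g i) -> INR n * c <= sumN n g.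
Proof. intros H. rewrite <- sumN_const. apply sumN_le; auto. Qed.

Lemma count1D x y a h K : 0 < h ->
  Rmin y (a + INR K * h) - Rmax x a - h <= h * sumN K (fun n => ind (x <= a + INR n * h <= y)).
Proof.
  intros Hh. induction K.
  - simpl. unfold Rmin, Rmax. destruct Rle_dec; destruct Rle_dec; lra.
  - simpl sumN. rewrite S_INR.
    assert (Hs : 0 <= sumN K (fun n => ind (x <= a + INR n * h <= y))).
    { apply sumN_nonneg; intros; apply ind_01. }
    set (p := a + INR K * h) in *.
    replace (a + (INR K + 1) * h) with (p + h) by (unfold p; ring).
    destruct (Rle_lt_dec x p) as [h1|h1]; [destruct (Rle_lt_dec p y) as [h2|h2]|].
    + rewrite ind_T by lra. revert IHK. unfold Rmin, Rmax; destruct Rle_dec; destruct Rle_dec; destruct Rle_dec; lra.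
    + rewrite ind_F by lra. revert IHK. unfold Rmin, Rmax; destruct Rle_dec; destruct Rle_dec; destruct Rle_dec; lra.
    + rewrite ind_F by lra.
      assert (Rmin y (p + h) - Rmax x a - h <= 0).
      { unfold Rmin, Rmax; destruct Rle_dec; destruct Rle_dec; lra. }
      nra.
Qed.
Section Chains.
Context {V : Type} (Rel : V -> V -> Prop).
Fixpoint chainP (x : V) (l : list V) (y : V) : Prop :=
  match l with nil => x = y | z :: l' => Rel x z /\ chainP z l' y end.

Lemma chain_split : forall p z l1 x s y, chainP z l1 y -> z :: l1 = p ++ x :: s -> chainP x s y.
Proof.
  induction p as [|w p IH]; intros z l1 x s y Hc E; simpl in E.
  - injection E; intros; subst; auto.
  - inversion E; subst.
    destruct p as [|u p'].
    + simpl in Hc. destruct Hc as [_ Hc]. exact Hc.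
    + simpl in Hc. destruct Hc as [_ Hc].
      apply (IH u (p' ++ x :: s) x s y Hc). reflexivity.
Qed.

Lemma shorten : forall l x y, chainP x l y ->
  exists l', chainP x l' y /\ NoDup (x :: l') /\ incl (x :: l') (x :: l).
Proof.
  induction l as [|z l IH]; intros x y Hc.
  - exists nil. split; [exact Hc|]. split; [constructor; [simpl; tauto| constructor]| apply incl_refl].
  - simpl in Hc. destruct Hc as [Hxz Hc].
    destruct (IH z y Hc) as [l1 [Hc1 [Hnd1 Hinc1]]].
    destruct (classic (In x (z :: l1))) as [Hin|Hnin].
    + destruct (in_split x (z :: l1) Hin) as [p [s E]].
      exists s. split; [apply (chain_split p z l1 x s y Hc1 E)|].
      split.
      * rewrite E in Hnd1. apply NoDup_app_remove_l in Hnd1. exact Hnd1.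
      * intros w Hw. destruct Hw as [<-|Hw]; [left; reflexivity|].
        right. apply Hinc1. rewrite E. apply in_or_app. right. right. exact Hw.
    + exists (z :: l1). split; [simpl; tauto|]. split; [constructor; assumption|].
      intros w [<-|Hw]; [left; reflexivity|]. right. apply Hinc1. exact Hw.
Qed.
End Chains.

Section Cover.
Context {V : Type} (a b : V -> R) (Hab : forall v, a v <= b v).

Definition cterm (al be : R) (v : V) : R :=
  ind (al <= b v /\ a v <= be) * Rmin (b v - a v) (be - al).

Lemma cterm_nonneg al be v : al <= be -> 0 <= cterm al be v.
Proof. intros H. unfold cterm. apply Rmult_le_pos; [apply ind_01|].
  generalize (Hab v). unfold Rmin; destruct Rle_dec; lra. Qed.

Lemma cterm_mono al al' be v : al <= al' <= be -> cterm al' be v <= cterm al be v.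
Proof.
  intros H. unfold cterm.
  destruct (classic (al' <= b v /\ a v <= be)) as [h|h].
  - rewrite !ind_T by lra. generalize (Hab v). unfold Rmin; destruct Rle_dec; destruct Rle_dec; lra.
  - rewrite (ind_F _ h). rewrite Rmult_0_l. apply Rmult_le_pos; [apply ind_01|].
    generalize (Hab v). unfold Rmin; destruct Rle_dec; lra.
Qed.

Lemma chain_cover be : forall l x y, chainP (fun u v => a v <= b u) x l y ->
  forall al, al <= be -> a x <= al -> be <= b y ->
  be - al <= lsum (cterm al be) (x :: l).
Proof.
  induction l as [|z l IH]; intros x y Hc al H1 H2 H3.
  - simpl in Hc. subst y. simpl. unfold cterm. rewrite ind_T by lra.
    generalize (Hab x). unfold Rmin; destruct Rle_dec; lra.
  - simpl in Hc. destruct Hc as [Hz Hc].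
    change (be - al <= cterm al be x + lsum (cterm al be) (z :: l)).
    destruct (Rle_lt_dec be (b x)) as [h|h].
    + assert (E : cterm al be x = be - al).
      { unfold cterm. rewrite ind_T by lra. generalize (Hab x). unfold Rmin; destruct Rle_dec; lra. }
      rewrite E. assert (0 <= lsum (cterm al be) (z :: l)) by (apply lsum_nonneg; intros; apply cterm_nonneg; lra).
      lra.
    + destruct (Rle_lt_dec al (b x)) as [h2|h2].
      * assert (E : b x - al <= cterm al be x).
        { unfold cterm. rewrite ind_T by lra. generalize (Hab x). unfold Rmin; destruct Rle_dec; lra. }
        assert (IH1 : be - b x <= lsum (cterm (b x) be) (z :: l)) by (apply (IH z y Hc); lra).
        assert (lsum (cterm (b x) be) (z :: l) <= lsum (cterm al be) (z :: l)).
        { apply lsum_le; intros; apply cterm_mono; lra. }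
        lra.
      * assert (IH1 : be - al <= lsum (cterm al be) (z :: l)) by (apply (IH z y Hc); lra).
        assert (0 <= cterm al be x) by (apply cterm_nonneg; lra). lra.
Qed.
End Cover.
Definition square (rho : R) (z : pt) : Prop := -rho <= fst z <= rho /\ -rho <= snd z <= rho.

Lemma square_compact rho : compact2 (square rho).
Proof.
  intros I U Hop Hcov.
  destruct (Rlt_le_dec rho 0) as [Hneg|Hpos].
  { exists nil. intros z [Hz _]. lra. }
  destruct (Hcov (0,0)) as [i0 _]. { unfold square; simpl; lra. }
  set (pt_of := fun t : Compactness.Tn 2 R => (fst t, fst (snd t)) : pt).
  assert (H : forall t : Compactness.Tn 2 R, exists p : I * posreal,
     square rho (pt_of t) -> forall w, dist2 (pt_of t) w < 2 * pos (snd p) -> U (fst p) w).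
  { intro t. destruct (classic (square rho (pt_of t))) as [Ht|Ht].
    - destruct (Hcov _ Ht) as [i Hi]. destruct (Hop i _ Hi) as [eps [He Hw]].
      assert (He2 : 0 < eps / 2) by lra.
      exists (i, mkposreal _ He2). intros _ w Hd. apply Hw. simpl in Hd. lra.
    - exists (i0, mkposreal 1 Rlt_0_1). intros Hc; tauto. }
  set (sel := fun t => proj1_sig (constructive_indefinite_description _ (H t))).
  assert (Hsel : forall t, square rho (pt_of t) -> forall w, dist2 (pt_of t) w < 2 * pos (snd (sel t)) -> U (fst (sel t)) w).
  { intro t. unfold sel. destruct (constructive_indefinite_description _ (H t)) as [p Hp]. exact Hp. }
  set (delta := fun t => snd (sel t)).
  apply NNPP. intro Hn.
  apply (Compactness.compactness_list 2 (-rho, (-rho, tt)) (rho, (rho, tt)) delta).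
  intros [l Hl]. apply Hn.
  exists (map (fun t => fst (sel t)) l).
  intros z Hz.
  destruct (Hl (fst z, (snd z, tt))) as [t [Htl [Htb Htc]]].
  { destruct Hz as [[h1 h2] [h3 h4]]. simpl. tauto. }
  destruct t as [t1 [t2 []]].
  exists (fst (sel (t1, (t2, tt)))). split.
  - apply in_map_iff. exists (t1, (t2, tt)). split; auto.
  - apply Hsel.
    + unfold pt_of, square; simpl. simpl in Htb. tauto.
    + simpl in Htc. destruct Htc as [c1 [c2 _]].
      unfold pt_of. simpl fst. simpl snd.
      unfold dist2. cbn [fst snd].
      eapply Rle_lt_trans; [apply nrm_le_abs|].
      rewrite (Rabs_minus_sym t1), (Rabs_minus_sym t2). unfold delta in c1, c2. lra.
Qed.
Lemma abs_fst_nrm z : Rabs (fst z) <= nrm z.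
Proof. apply abs_le_nrm. Qed.
Lemma abs_snd_nrm z : Rabs (snd z) <= nrm z.
Proof. unfold nrm. rewrite Rplus_comm. apply abs_le_nrm. Qed.

Definition quad (dx dy : R) : nat :=
  if excluded_middle_informative (dx = 0 /\ dy = 0) then 0%nat
  else if excluded_middle_informative (0 < dx /\ 0 <= dy) then 1%nat
  else if excluded_middle_informative (dx <= 0 /\ 0 < dy) then 2%nat
  else if excluded_middle_informative (dx < 0 /\ dy <= 0) then 3%nat
  else 4%nat.

Lemma quad_in dx dy : In (quad dx dy) (0 :: 1 :: 2 :: 3 :: 4 :: nil)%nat.
Proof. unfold quad; repeat destruct excluded_middle_informative; simpl; tauto. Qed.

Lemma quad_sep dx1 dy1 dx2 dy2 : quad dx1 dy1 = quad dx2 dy2 ->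
  dx1 * dx2 + dy1 * dy2 <= 0 -> 0 < (dx1 - dx2) ^ 2 + (dy1 - dy2) ^ 2 -> False.
Proof.
  intros E H1 H2. unfold quad in E.
  repeat destruct excluded_middle_informative in E; try discriminate; try nra.
Qed.

Lemma lsum_ind_count {V : Type} (Q : V -> Prop) l :
  lsum (fun v => ind (Q v)) l =
  INR (length (filter (fun v => if excluded_middle_informative (Q v) then true else false) l)).
Proof.
  induction l as [|x l IH]; simpl; [reflexivity|].
  unfold ind at 1. destruct excluded_middle_informative; simpl length; rewrite IH; [rewrite S_INR|]; ring.
Qed.

Lemma NoDup_map_inj {A B : Type} (f : A -> B) l :
  NoDup l -> (forall x y, In x l -> In y l -> f x = f y -> x = y) -> NoDup (map f l).
Proof.
  induction l as [|x l IH]; intros Hn Hi; simpl; constructor.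
  - inversion Hn; subst. intro Hin. apply in_map_iff in Hin. destruct Hin as [y [Ey Hy]].
    assert (y = x) by (apply Hi; simpl; auto). subst; contradiction.
  - inversion Hn; subst. apply IH; auto. intros; apply Hi; simpl; auto.
Qed.

Lemma exists_nat_between X : 0 < X -> exists M : nat, X <= INR M <= X + 1.
Proof.
  intros HX. destruct (archimed X) as [h1 h2].
  assert (Hz : (0 <= up X)%Z). { apply le_IZR. lra. }
  exists (Z.to_nat (up X)). rewrite INR_IZR_INZ, Z2Nat.id by exact Hz. lra.
Qed.

Section Geo.
Context {V : Type} (adj : V -> V -> Prop) (Th : V -> V -> R) (P : V -> disk).
Context (Hth : forall u v, adj u v -> 0 <= Th u v <= PI / 2).
Context (Hpat : disk_pattern P) (Hreal : realizes adj Th P).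

Definition cc v := dcenter (P v).
Definition rr v := dradius (P v).
Definition aa v := nrm (cc v) - rr v.
Definition bb v := nrm (cc v) + rr v.

Lemma rr_pos v : 0 < rr v.
Proof. destruct Hpat as [H _]. apply H. Qed.

Lemma aa_le_bb v : aa v <= bb v.
Proof. unfold aa, bb. generalize (rr_pos v); lra. Qed.

Lemma meet_ineq u v : disks_meet (P u) (P v) -> aa v <= bb u.
Proof.
  intros [z [Hu Hv]]. unfold in_disk in Hu, Hv. unfold aa, bb, cc, rr.
  rewrite !nrm_dist.
  assert (H1 := dist2_tri z (dcenter (P u)) (0,0)).
  assert (H2 := dist2_tri (dcenter (P v)) z (0,0)).
  rewrite (dist2_sym (dcenter (P v)) z) in H2. lra.
Qed.

Lemma angle_sep u v : u <> v -> disks_meet (P u) (P v) ->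
  rr u ^ 2 + rr v ^ 2 <= (fst (cc u) - fst (cc v)) ^ 2 + (snd (cc u) - snd (cc v)) ^ 2.
Proof.
  intros Huv Hm. destruct Hreal as [_ [Hiff Hang]].
  assert (Ha : adjt adj Th u v) by (apply (proj1 (Hiff u v Huv)); exact Hm).
  destruct (Hang u v Ha) as [[Ht0 Htpi] [z [Hz1 [Hz2 Hcos]]]].
  assert (Hle : Tht adj Th u v <= PI / 2).
  { unfold Tht. destruct excluded_middle_informative as [h|h].
    - apply Hth; exact h.
    - generalize PI_RGT_0; lra. }
  assert (Hc0 : 0 <= cos (Tht adj Th u v)) by (apply cos_ge_0; lra).
  rewrite Hcos in Hc0.
  unfold on_circle in Hz1, Hz2.
  apply sq_eq_of_sqrt in Hz1; [|apply sum_sq_nonneg].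
  apply sq_eq_of_sqrt in Hz2; [|apply sum_sq_nonneg].
  assert (ru := rr_pos u). assert (rv := rr_pos v). unfold rr in ru, rv.
  unfold dot, cw_tangent, ccw_tangent in Hc0. cbn [fst snd] in Hc0.
  unfold cc, rr.
  set (X1 := fst z - fst (dcenter (P u))) in *.
  set (Y1 := snd z - snd (dcenter (P u))) in *.
  set (X2 := fst z - fst (dcenter (P v))) in *.
  set (Y2 := snd z - snd (dcenter (P v))) in *.
  set (r1 := dradius (P u)) in *. set (r2 := dradius (P v)) in *.
  set (d := Y1 / r1 * (- Y2 / r2) + - X1 / r1 * (X2 / r2)) in *.
  assert (ES : X1 * X2 + Y1 * Y2 = - d * (r1 * r2)) by (unfold d; field; lra).
  assert (HS : X1 * X2 + Y1 * Y2 <= 0).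
  { rewrite ES. assert (0 <= d * (r1 * r2)) by (apply Rmult_le_pos; nra). lra. }
  replace (fst (dcenter (P u)) - fst (dcenter (P v))) with (X2 - X1) by (unfold X1, X2; ring).
  replace (snd (dcenter (P u)) - snd (dcenter (P v))) with (Y2 - Y1) by (unfold Y1, Y2; ring).
  assert (E : (X2 - X1) ^ 2 + (Y2 - Y1) ^ 2 = (X1 ^ 2 + Y1 ^ 2) + (X2 ^ 2 + Y2 ^ 2) - 2 * (X1 * X2 + Y1 * Y2)) by ring.
  lra.
Qed.

Definition qcat (p : pt) (v : V) : nat := quad (fst (cc v) - fst p) (snd (cc v) - snd p).

Lemma in_disk_sq v p : in_disk (P v) p ->
  (fst p - fst (cc v)) ^ 2 + (snd p - snd (cc v)) ^ 2 <= rr v ^ 2.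
Proof.
  unfold in_disk, dist2. intros H. apply sqrt_le_iff in H; [exact H|apply sum_sq_nonneg|].
  generalize (rr_pos v); unfold rr; lra.
Qed.

Lemma qcat_inj p u v : in_disk (P u) p -> in_disk (P v) p -> qcat p u = qcat p v -> u = v.
Proof.
  intros Hu Hv E. destruct (classic (u = v)) as [h|h]; [exact h|exfalso].
  assert (Hs := angle_sep u v h (ex_intro _ p (conj Hu Hv))).
  apply in_disk_sq in Hu. apply in_disk_sq in Hv.
  assert (ru := rr_pos u). assert (rv := rr_pos v).
  apply (quad_sep _ _ _ _ E).
  - set (A1 := fst (cc u) - fst p) in *. set (B1 := snd (cc u) - snd p) in *.
    set (A2 := fst (cc v) - fst p) in *. set (B2 := snd (cc v) - snd p) in *.
    assert (E1 : (fst p - fst (cc u)) ^ 2 + (snd p - snd (cc u)) ^ 2 = A1 ^ 2 + B1 ^ 2) by (unfold A1, B1; ring).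
    assert (E2 : (fst p - fst (cc v)) ^ 2 + (snd p - snd (cc v)) ^ 2 = A2 ^ 2 + B2 ^ 2) by (unfold A2, B2; ring).
    assert (E3 : (fst (cc u) - fst (cc v)) ^ 2 + (snd (cc u) - snd (cc v)) ^ 2 = (A1 - A2) ^ 2 + (B1 - B2) ^ 2) by (unfold A1, A2, B1, B2; ring).
    assert (E4 : (A1 - A2) ^ 2 + (B1 - B2) ^ 2 = A1 ^ 2 + B1 ^ 2 + (A2 ^ 2 + B2 ^ 2) - 2 * (A1 * A2 + B1 * B2)) by ring.
    lra.
  - replace ((fst (cc u) - fst p) - (fst (cc v) - fst p)) with (fst (cc u) - fst (cc v)) by ring.
    replace ((snd (cc u) - snd p) - (snd (cc v) - snd p)) with (snd (cc u) - snd (cc v)) by ring.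
    assert (0 < rr u ^ 2) by (apply pow_lt; lra). assert (0 < rr v ^ 2) by (apply pow_lt; lra). lra.
Qed.

Lemma multiplicity p l : NoDup l -> lsum (fun v => ind (in_disk (P v) p)) l <= 5.
Proof.
  intros Hn. rewrite lsum_ind_count.
  set (l' := filter _ l).
  assert (Hl' : forall v, In v l' -> in_disk (P v) p).
  { intros v Hv. unfold l' in Hv. apply filter_In in Hv. destruct Hv as [_ Hv].
    destruct excluded_middle_informative; [assumption|discriminate]. }
  assert (Hnd : NoDup (map (qcat p) l')).
  { apply NoDup_map_inj. apply NoDup_filter; exact Hn.
    intros x y Hx Hy E. apply (qcat_inj p); auto. }
  assert (Hinc : incl (map (qcat p) l') (0 :: 1 :: 2 :: 3 :: 4 :: nil)%nat).
  { intros k Hk. apply in_map_iff in Hk. destruct Hk as [v [<- _]]. apply quad_in. }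
  assert (Hlen := NoDup_incl_length Hnd Hinc).
  rewrite length_map in Hlen. simpl in Hlen.
  apply le_INR in Hlen. simpl in Hlen. lra.
Qed.


Context (Hlf : locally_finite P).

Lemma fin_exists rho : exists L : list V, forall v, aa v <= rho -> In v L.
Proof.
  set (rho' := Rmax rho 0).
  destruct (Hlf (square rho') (square_compact rho')) as [L HL].
  exists L. intros v Hv. apply HL.
  assert (H0 : 0 <= rho') by apply Rmax_r.
  assert (Hr : rho <= rho') by apply Rmax_l.
  destruct (Rle_lt_dec (nrm (cc v)) (rr v)) as [h|h].
  - exists (0,0). split; [unfold square; simpl; lra|].
    unfold in_disk. rewrite dist2_sym, <- nrm_dist. exact h.
  - assert (Ht : 0 <= rr v < nrm (cc v)) by (generalize (rr_pos v); lra).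
    destruct (shrink_pt (cc v) (rr v) Ht) as [D N].
    set (l := (nrm (cc v) - rr v) / nrm (cc v)) in *.
    exists (l * fst (cc v), l * snd (cc v)). split.
    + assert (h1 := abs_fst_nrm (l * fst (cc v), l * snd (cc v))).
      assert (h2 := abs_snd_nrm (l * fst (cc v), l * snd (cc v))).
      rewrite N in h1, h2. unfold aa in Hv. cbn [fst snd] in h1, h2.
      unfold square; cbn [fst snd].
      revert h1 h2; unfold Rabs; repeat destruct Rcase_abs; intros; lra.
    + change (dist2 (l * fst (cc v), l * snd (cc v)) (cc v) <= rr v). rewrite D. lra.
Qed.
Definition Mv (q : R) v : Prop := q <= bb v /\ aa v <= 2 * q.
Definition sv (q : R) v : R := Rmin (rr v) (q / 2).
Definition eta (q : R) v : R := ind (Mv q v) * sv q v / q.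

Lemma sv_pos q v : 0 < q -> 0 < sv q v.
Proof. intros Hq. unfold sv, Rmin. destruct Rle_dec; generalize (rr_pos v); lra. Qed.

Lemma hmin q l : 0 < q ->
  let h := fold_right Rmin q (map (fun v => sv q v / 2) l) in
  0 < h /\ h <= q /\ forall v, In v l -> h <= sv q v / 2.
Proof.
  intros Hq. induction l as [|x l IH]; simpl.
  - split; [lra|]. split; [lra|]. tauto.
  - destruct IH as [h1 [h2 h3]].
    set (h := fold_right Rmin q (map (fun v => sv q v / 2) l)) in *.
    assert (hx := sv_pos q x Hq).
    split; [unfold Rmin; destruct Rle_dec; lra|].
    split; [unfold Rmin; destruct Rle_dec; lra|].
    intros v [<-|Hv]; [apply Rmin_l|].
    apply Rle_trans with h; [apply Rmin_r|auto].
Qed.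

Lemma subcenter q v : 0 < q -> Mv q v -> exists c' : pt,
  dist2 c' (cc v) <= rr v - sv q v /\ Rabs (fst c') <= 2 * q + sv q v /\ Rabs (snd c') <= 2 * q + sv q v.
Proof.
  intros Hq [_ Ha].
  assert (Hs : 0 < sv q v) by (apply sv_pos; exact Hq).
  assert (Hsr : sv q v <= rr v) by apply Rmin_l.
  destruct (Rle_lt_dec (nrm (cc v)) (rr v - sv q v)) as [h|h].
  - exists (0,0). rewrite dist2_sym, <- nrm_dist. simpl. rewrite Rabs_R0. lra.
  - assert (Ht : 0 <= rr v - sv q v < nrm (cc v)) by lra.
    destruct (shrink_pt (cc v) _ Ht) as [D N].
    set (l := (nrm (cc v) - (rr v - sv q v)) / nrm (cc v)) in *.
    exists (l * fst (cc v), l * snd (cc v)). rewrite D.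
    assert (h1 := abs_fst_nrm (l * fst (cc v), l * snd (cc v))).
    assert (h2 := abs_snd_nrm (l * fst (cc v), l * snd (cc v))).
    rewrite N in h1, h2. unfold aa in Ha. lra.
Qed.

Lemma box_in_disk v c' s (p : pt) : 0 < s -> dist2 c' (cc v) <= rr v - s ->
  fst c' - s / 2 <= fst p <= fst c' + s / 2 -> snd c' - s / 2 <= snd p <= snd c' + s / 2 ->
  in_disk (P v) p.
Proof.
  intros Hs Hd H1 H2. unfold in_disk. change (dist2 p (cc v) <= rr v).
  assert (Hp : dist2 p c' <= s).
  { unfold dist2. apply sqrt_le_iff; [apply sum_sq_nonneg|lra|].
    set (dx := fst p - fst c'). set (dy := snd p - snd c').
    assert (-(s/2) <= dx <= s/2) by (unfold dx; lra).
    assert (-(s/2) <= dy <= s/2) by (unfold dy; lra).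
    assert (dx * dx <= s * s / 4) by nra. assert (dy * dy <= s * s / 4) by nra.
    replace (dx ^ 2) with (dx * dx) by ring. replace (dy ^ 2) with (dy * dy) by ring.
    replace (s ^ 2) with (s * s) by ring. nra. }
  generalize (dist2_tri p c' (cc v)). lra.
Qed.

Lemma shell_pack q l : 0 < q -> NoDup l -> lsum (fun v => eta q v ^ 2) l <= 1280.
Proof.
  intros Hq Hnd.
  destruct (hmin q l Hq) as [Hh0 [HhR Hhv]].
  set (h := fold_right Rmin q (map (fun v => sv q v / 2) l)) in *.
  set (L := 3 * q).
  destruct (exists_nat_between (2 * L / h)) as [M [HM1 HM2]].
  { apply Rdiv_lt_0_compat; unfold L; lra. }
  assert (HMh1 : 2 * L <= INR M * h).
  { apply Rmult_le_compat_r with (r := h) in HM1; [|lra]. 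
    replace (2 * L / h * h) with (2 * L) in HM1 by (field; lra). exact HM1. }
  assert (HMh2 : INR M * h <= 2 * L + h).
  { apply Rmult_le_compat_r with (r := h) in HM2; [|lra].
    replace ((2 * L / h + 1) * h) with (2 * L + h) in HM2 by (field; lra). exact HM2. }
  set (K := S M).
  set (Nv := fun v => sumN K (fun n => sumN K (fun k =>
               ind (in_disk (P v) (-L + INR n * h, -L + INR k * h))))).
  assert (HN0 : forall v, 0 <= Nv v).
  { intro v. apply sumN_nonneg; intros; apply sumN_nonneg; intros; apply ind_01. }
  assert (HA : forall v, In v l -> ind (Mv q v) * sv q v ^ 2 <= 4 * h ^ 2 * Nv v).
  { intros v Hv.
    destruct (classic (Mv q v)) as [HM|HM].
    2:{ rewrite ind_F by exact HM. assert (0 <= h ^ 2) by apply pow2_ge_0.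
        assert (0 <= Nv v) by apply HN0. nra. }
    rewrite ind_T by exact HM.
    set (s := sv q v) in *.
    assert (Hs : 0 < s) by (apply sv_pos; lra).
    assert (Hsq : s <= q / 2) by apply Rmin_r.
    assert (Hhs : h <= s / 2) by (apply Hhv; exact Hv).
    destruct (subcenter q v Hq HM) as [c' [Hd [Hx Hy]]]. fold s in Hd, Hx, Hy.
    set (SX := sumN K (fun n => ind (fst c' - s / 2 <= -L + INR n * h <= fst c' + s / 2))).
    set (SY := sumN K (fun k => ind (snd c' - s / 2 <= -L + INR k * h <= snd c' + s / 2))).
    assert (HXY : SX * SY <= Nv v).
    { unfold SX, SY, Nv. rewrite sumN_prod. apply sumN_le; intros n Hn. apply sumN_le; intros k Hk.
      destruct (classic (fst c' - s / 2 <= -L + INR n * h <= fst c' + s / 2)) as [a1|a1];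
      destruct (classic (snd c' - s / 2 <= -L + INR k * h <= snd c' + s / 2)) as [a2|a2].
      - rewrite !ind_T; auto. lra. apply (box_in_disk v c' s); auto; simpl; lra.
      - rewrite (ind_F _ a2). generalize (ind_01 (in_disk (P v) (-L + INR n * h, -L + INR k * h))). lra.
      - rewrite (ind_F _ a1). generalize (ind_01 (in_disk (P v) (-L + INR n * h, -L + INR k * h))). lra.
      - rewrite (ind_F _ a1). generalize (ind_01 (in_disk (P v) (-L + INR n * h, -L + INR k * h))). lra. }
    assert (HK : INR K = INR M + 1) by (unfold K; apply S_INR).
    assert (Hx1 : Rabs (fst c') <= 2 * q + s) by exact Hx.
    assert (Hy1 : Rabs (snd c') <= 2 * q + s) by exact Hy.
    assert (-(2*q+s) <= fst c' <= 2*q+s) by (revert Hx1; unfold Rabs; destruct Rcase_abs; intros; lra).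
    assert (-(2*q+s) <= snd c' <= 2*q+s) by (revert Hy1; unfold Rabs; destruct Rcase_abs; intros; lra).
    assert (C1 := count1D (fst c' - s / 2) (fst c' + s / 2) (-L) h K Hh0).
    assert (C2 := count1D (snd c' - s / 2) (snd c' + s / 2) (-L) h K Hh0).
    fold SX in C1. fold SY in C2.
    rewrite HK in C1, C2.
    assert (E1 : Rmin (fst c' + s / 2) (- L + (INR M + 1) * h) = fst c' + s / 2).
    { apply Rmin_left. unfold L in *. lra. }
    assert (E2 : Rmax (fst c' - s / 2) (- L) = fst c' - s / 2).
    { apply Rmax_left. unfold L in *. lra. }
    assert (E3 : Rmin (snd c' + s / 2) (- L + (INR M + 1) * h) = snd c' + s / 2).
    { apply Rmin_left. unfold L in *. lra. }
    assert (E4 : Rmax (snd c' - s / 2) (- L) = snd c' - s / 2).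
    { apply Rmax_left. unfold L in *. lra. }
    rewrite E1, E2 in C1. rewrite E3, E4 in C2.
    assert (hSX : s / 2 <= h * SX) by lra.
    assert (hSY : s / 2 <= h * SY) by lra.
    assert (s / 2 * (s / 2) <= (h * SX) * (h * SY)) by (apply Rmult_le_compat; lra).
    assert (h ^ 2 * (SX * SY) <= h ^ 2 * Nv v) by (apply Rmult_le_compat_l; [apply pow2_ge_0|exact HXY]).
    replace (1 * s ^ 2) with (4 * (s / 2 * (s / 2))) by field.
    replace (h * SX * (h * SY)) with (h ^ 2 * (SX * SY)) in * by ring. lra. }
  assert (HB : lsum Nv l <= 5 * (INR K * INR K)).
  { unfold Nv. rewrite swap_lsum_sumN.
    replace (5 * (INR K * INR K)) with (sumN K (fun _ => sumN K (fun _ => 5))).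
    2:{ rewrite !sumN_const. ring. }
    apply sumN_le; intros n Hn.
    rewrite (swap_lsum_sumN K (fun v k => ind (in_disk (P v) (-L + INR n * h, -L + INR k * h)))).
    apply sumN_le; intros k Hk. apply multiplicity; auto. }
  assert (HKh : INR K * h <= 8 * q).
  { unfold K. rewrite S_INR. unfold L in HMh2. lra. }
  assert (HKh0 : 0 <= INR K * h) by (apply Rmult_le_pos; [apply pos_INR|lra]).
  assert (HS : lsum (fun v => ind (Mv q v) * sv q v ^ 2) l <= 4 * h ^ 2 * lsum Nv l).
  { rewrite <- lsum_scal. apply lsum_le. exact HA. }
  assert (E : lsum (fun v => eta q v ^ 2) l = / q ^ 2 * lsum (fun v => ind (Mv q v) * sv q v ^ 2) l).
  { rewrite <- lsum_scal. apply lsum_ext. intros v _. unfold eta.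
    replace ((ind (Mv q v) * sv q v / q) ^ 2) with (ind (Mv q v) ^ 2 * sv q v ^ 2 / q ^ 2) by (field; lra).
    rewrite ind_sq. field. lra. }
  rewrite E.
  assert (Hq2 : 0 < q ^ 2) by (apply pow_lt; lra).
  assert (4 * h ^ 2 * lsum Nv l <= 4 * h ^ 2 * (5 * (INR K * INR K))).
  { apply Rmult_le_compat_l; [assert (0 <= h ^ 2) by apply pow2_ge_0; lra| exact HB]. }
  assert (HKK : (INR K * h) * (INR K * h) <= (8 * q) * (8 * q)) by (apply Rmult_le_compat; lra).
  apply Rmult_le_reg_l with (r := q ^ 2); [exact Hq2|].
  rewrite <- Rmult_assoc, Rinv_r by lra. rewrite Rmult_1_l.
  replace (4 * h ^ 2 * (5 * (INR K * INR K))) with (20 * ((INR K * h) * (INR K * h))) in * by ring.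
  replace (q ^ 2 * 1280) with (20 * ((8 * q) * (8 * q))) by ring.
  lra.
Qed.
Context (Hsimp : simple_graph adj).

Definition finL (rho : R) : list V :=
  proj1_sig (constructive_indefinite_description _ (fin_exists rho)).
Lemma finL_spec rho v : aa v <= rho -> In v (finL rho).
Proof. unfold finL. destruct constructive_indefinite_description as [L HL]. apply HL. Qed.

Lemma fold_max_ge (L : list V) v : In v L -> bb v <= fold_right Rmax 0 (map bb L).
Proof.
  induction L as [|x L IH]; simpl; [tauto|]. intros [<-|Hv]; [apply Rmax_l|].
  eapply Rle_trans; [apply IH; exact Hv| apply Rmax_r].
Qed.

Definition ext (rho : R) : R := fold_right Rmax 0 (map bb (finL rho)).
Lemma ext_spec rho v : aa v <= rho -> bb v <= ext rho.
Proof. intros H. apply fold_max_ge, finL_spec, H. Qed.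

Fixpoint Rs (R0 : R) (n : nat) : R :=
  match n with O => R0 | S k => Rmax (2 * Rs R0 k) (ext (2 * Rs R0 k)) + 1 end.

Lemma Rs_ge1 R0 n : 1 <= R0 -> 1 <= Rs R0 n.
Proof. intros H; induction n; simpl; [exact H|].
  generalize (Rmax_l (2 * Rs R0 n) (ext (2 * Rs R0 n))); lra. Qed.

Lemma Rs_mono R0 i j : 1 <= R0 -> (i <= j)%nat -> Rs R0 i <= Rs R0 j.
Proof.
  intros H Hij. induction Hij; [lra|]. simpl.
  generalize (Rmax_l (2 * Rs R0 m) (ext (2 * Rs R0 m))) (Rs_ge1 R0 m H); lra.
Qed.

Lemma Rs_disj R0 i j v : 1 <= R0 -> (i < j)%nat -> Mv (Rs R0 i) v -> Mv (Rs R0 j) v -> False.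
Proof.
  intros H Hij [_ Ha] [Hb _].
  assert (E := ext_spec _ _ Ha).
  assert (Hm := Rs_mono R0 (S i) j H Hij). simpl in Hm.
  generalize (Rmax_r (2 * Rs R0 i) (ext (2 * Rs R0 i))). lra.
Qed.

Lemma eta_nonneg q v : 0 < q -> 0 <= eta q v.
Proof. intros Hq. unfold eta. apply div_nonneg; [|lra].
  apply Rmult_le_pos; [apply ind_01| generalize (sv_pos q v Hq); lra]. Qed.

Lemma eta_cterm q v : 0 < q -> eta q v = cterm aa bb q (2 * q) v / (2 * q).
Proof.
  intros Hq. unfold eta, cterm, Mv, sv.
  replace (bb v - aa v) with (2 * rr v) by (unfold aa, bb; ring).
  replace (2 * q - q) with q by ring.
  assert (E : Rmin (2 * rr v) q = 2 * Rmin (rr v) (q / 2)).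
  { unfold Rmin; destruct Rle_dec; destruct Rle_dec; lra. }
  rewrite E. field. lra.
Qed.

Definition eta_comb (R0 : R) (N : nat) (v : V) : R :=
  2 / INR N * sumN N (fun i => eta (Rs R0 i) v).

Lemma eta_comb_nonneg R0 N v : 1 <= R0 -> (0 < N)%nat -> 0 <= eta_comb R0 N v.
Proof.
  intros H HN. unfold eta_comb. apply Rmult_le_pos.
  - apply div_nonneg; [lra| apply lt_0_INR; exact HN].
  - apply sumN_nonneg. intros i _. apply eta_nonneg. generalize (Rs_ge1 R0 i H); lra.
Qed.

Lemma area_bound R0 N L : 1 <= R0 -> (0 < N)%nat -> NoDup L ->
  lsum (fun v => eta_comb R0 N v ^ 2) L <= 5120 / INR N.
Proof.
  intros H HN Hnd.
  assert (HN' : 0 < INR N) by (apply lt_0_INR; exact HN).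
  assert (E : forall v, eta_comb R0 N v ^ 2 = 4 / INR N ^ 2 * sumN N (fun i => eta (Rs R0 i) v ^ 2)).
  { intro v. unfold eta_comb. rewrite <- sq_disjoint.
    - field. lra.
    - intros i j Hi Hj Hij.
      destruct (classic (Mv (Rs R0 i) v)) as [h1|h1].
      + destruct (classic (Mv (Rs R0 j) v)) as [h2|h2].
        * exfalso. destruct (Nat.lt_gt_cases i j) as [[c|c] _]; [exact Hij| |].
          -- exact (Rs_disj R0 i j v H c h1 h2).
          -- exact (Rs_disj R0 j i v H c h2 h1).
        * right. unfold eta. rewrite (ind_F _ h2). unfold Rdiv; ring.
      + left. unfold eta. rewrite (ind_F _ h1). unfold Rdiv; ring. }
  rewrite (lsum_ext _ _ L (fun v _ => E v)).
  rewrite lsum_scal. rewrite swap_lsum_sumN.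
  assert (Hs : sumN N (fun i => lsum (fun v => eta (Rs R0 i) v ^ 2) L) <= INR N * 1280).
  { rewrite <- sumN_const. apply sumN_le. intros i _. apply shell_pack; [generalize (Rs_ge1 R0 i H); lra| exact Hnd]. }
  assert (0 <= 4 / INR N ^ 2) by (apply div_nonneg; [lra| apply pow_lt; lra]).
  apply Rle_trans with (4 / INR N ^ 2 * (INR N * 1280)).
  - apply Rmult_le_compat_l; auto.
  - right. field. lra.
Qed.

Lemma chain_of_f (f : nat -> V) : (forall n, adj (f n) (f (S n))) ->
  forall m k, chainP (fun x y => aa y <= bb x) (f k) (map f (seq (S k) m)) (f (k + m)%nat).
Proof.
  intros Hf. induction m; intros k.
  - simpl. rewrite Nat.add_0_r. reflexivity.
  - simpl. split.
    + apply meet_ineq. destruct Hreal as [_ [Hiff _]].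
      assert (Hne : f k <> f (S k)).
      { intro E. destruct Hsimp as [_ Hirr]. apply (Hirr (f k)). rewrite E at 2. apply Hf. }
      apply (proj2 (Hiff _ _ Hne)). left. apply Hf.
    + replace (k + S m)%nat with (S k + m)%nat by lia. apply IHm.
Qed.

Lemma length_bound (V0 : V -> Prop) (l0 : list V) (HV0 : forall v, V0 v -> In v l0) N gam :
  (0 < N)%nat -> paths_to_infinity adj V0 gam ->
  Rbar_le 1 (vlength (eta_comb (Rmax 1 (fold_right Rmax 0 (map bb l0))) N) gam).
Proof.
  set (R0 := Rmax 1 (fold_right Rmax 0 (map bb l0))).
  assert (HR0 : 1 <= R0) by apply Rmax_l.
  intros HN [f [Hf0 [Hfadj [Hinf Hgam]]]].
  set (rho := 2 * Rs R0 N).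
  assert (Hm : exists m, ~ In (f m) (finL rho)).
  { apply NNPP. intro Hn. apply Hinf. exists (finL rho). intros v [n <-].
    apply NNPP. intro h. apply Hn. exists n. exact h. }
  destruct Hm as [m Hm].
  assert (Ham : rho < aa (f m)).
  { destruct (Rlt_le_dec rho (aa (f m))) as [h|h]; [exact h|]. exfalso. apply Hm, finL_spec, h. }
  assert (Hc := chain_of_f f Hfadj m 0). simpl in Hc.
  destruct (shorten _ _ _ _ Hc) as [l' [Hc' [Hnd Hinc]]].
  set (Lst := f 0%nat :: l').
  assert (Hgl : forall v, In v Lst -> gam v).
  { intros v Hv. apply Hinc in Hv. apply Hgam. destruct Hv as [<-|Hv]; [exists 0%nat; reflexivity|].
    apply in_map_iff in Hv. destruct Hv as [k [<- _]]. exists k; reflexivity. }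
  assert (Hb0 : bb (f 0%nat) <= R0).
  { eapply Rle_trans; [apply fold_max_ge; apply HV0; exact Hf0| apply Rmax_r]. }
  assert (Hi : forall i, (i < N)%nat -> 1 / 2 <= lsum (eta (Rs R0 i)) Lst).
  { intros i Hi.
    assert (HRi : 1 <= Rs R0 i) by (apply Rs_ge1; exact HR0).
    assert (HR0i : R0 <= Rs R0 i) by (apply (Rs_mono R0 0 i HR0); lia).
    assert (HRiN : Rs R0 i <= Rs R0 N) by (apply Rs_mono; [exact HR0| lia]).
    assert (Hcov := chain_cover aa bb aa_le_bb (2 * Rs R0 i) l' (f 0%nat) (f m) Hc' (Rs R0 i)).
    assert (Hcov' : 2 * Rs R0 i - Rs R0 i <= lsum (cterm aa bb (Rs R0 i) (2 * Rs R0 i)) Lst).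
    { apply Hcov; [lra| generalize (aa_le_bb (f 0%nat)); lra| generalize (aa_le_bb (f m)); unfold rho in Ham; lra]. }
    rewrite (lsum_ext _ (fun v => / (2 * Rs R0 i) * cterm aa bb (Rs R0 i) (2 * Rs R0 i) v)).
    - rewrite lsum_scal. apply Rmult_le_reg_l with (r := 2 * Rs R0 i); [lra|].
      rewrite <- Rmult_assoc, Rinv_r by lra. lra.
    - intros v _. rewrite eta_cterm by lra. unfold Rdiv. ring. }
  assert (Hsum : 1 <= lsum (eta_comb R0 N) Lst).
  { unfold eta_comb. rewrite lsum_scal.
    rewrite (swap_lsum_sumN N (fun v i => eta (Rs R0 i) v) Lst).
    assert (HN' : 0 < INR N) by (apply lt_0_INR; exact HN).
    assert (INR N * (1 / 2) <= sumN N (fun i => lsum (fun v => eta (Rs R0 i) v) Lst)).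
    { apply sumN_lb. intros i Hi'. apply Hi; exact Hi'. }
    apply Rmult_le_reg_l with (r := INR N); [lra|].
    replace (INR N * (2 / INR N * sumN N (fun i => lsum (fun v => eta (Rs R0 i) v) Lst)))
      with (2 * sumN N (fun i => lsum (fun v => eta (Rs R0 i) v) Lst)) by (field; lra).
    lra. }
  unfold vlength, sum_over.
  destruct (Lub_Rbar_correct (fun s => exists l : list V, NoDup l /\ (forall v, In v l -> gam v) /\
            s = fold_right (fun v acc => eta_comb R0 N v + acc) 0 l)) as [Hub _].
  apply Rbar_le_trans with (Finite (lsum (eta_comb R0 N) Lst)); [simpl; exact Hsum|].
  apply Hub. exists Lst. split; [exact Hnd|]. split; [exact Hgl| reflexivity].
Qed.
Context (Hconn : connected_graph adj).

Lemma area_lub (e : V -> R) B : (forall L, NoDup L -> lsum (fun v => e v ^ 2) L <= B) ->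
  exists a, area e = Finite a /\ 0 <= a /\ a <= B.
Proof.
  intros HB. unfold area, sum_over.
  destruct (Lub_Rbar_correct (fun s => exists l : list V, NoDup l /\ (forall v, In v l -> True) /\
            s = fold_right (fun v acc => e v ^ 2 + acc) 0 l)) as [Hub Hlub].
  assert (H0 := Hub 0 (ex_intro _ nil (conj (NoDup_nil _) (conj (fun _ h => I) eq_refl)))).
  assert (H1 : Rbar_le (Lub_Rbar (fun s => exists l : list V, NoDup l /\ (forall v, In v l -> True) /\
            s = fold_right (fun v acc => e v ^ 2 + acc) 0 l)) B).
  { apply Hlub. intros x [l [Hn [_ ->]]]. simpl. apply HB; exact Hn. }
  destruct (Lub_Rbar _) as [a| |]; simpl in H0, H1; try tauto.
  exists a. tauto.
Qed.

Lemma area_nonneg (e : V -> R) a : area e = Finite a -> 0 <= a.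
Proof.
  intros E. unfold area, sum_over in E.
  destruct (Lub_Rbar_correct (fun s => exists l : list V, NoDup l /\ (forall v, In v l -> True) /\
            s = fold_right (fun v acc => e v ^ 2 + acc) 0 l)) as [Hub _].
  assert (H0 := Hub 0 (ex_intro _ nil (conj (NoDup_nil _) (conj (fun _ h => I) eq_refl)))).
  rewrite E in H0. exact H0.
Qed.

Lemma parabolic_main : VEL_parabolic adj.
Proof.
  split; [exact Hconn|]. intros V0 [l0 Hl0] _.
  set (R0 := Rmax 1 (fold_right Rmax 0 (map bb l0))).
  assert (HR0 : 1 <= R0) by apply Rmax_l.
  set (Gam := paths_to_infinity adj V0).
  assert (Key : forall N, (0 < N)%nat -> exists a,
     (exists e, admissible Gam e /\ area e = Finite a) /\ a <= 5120 / INR N).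
  { intros N HN.
    destruct (area_lub (eta_comb R0 N) (5120 / INR N)) as [a [Ea [_ Hab]]].
    { intros L HL. apply area_bound; auto. }
    exists a. split; [|exact Hab]. exists (eta_comb R0 N). split; [|exact Ea].
    split.
    - intro v. apply eta_comb_nonneg; auto.
    - intros gam Hg. apply (length_bound V0 l0 Hl0 N gam HN Hg). }
  assert (HMOD : MOD Gam = Finite 0).
  { unfold MOD.
    destruct (Glb_Rbar_correct (fun a => exists e, admissible Gam e /\ area e = Finite a)) as [Hlb Hglb].
    apply Rbar_le_antisym.
    - assert (Hall : forall N, (0 < N)%nat ->
        Rbar_le (Glb_Rbar (fun a => exists e, admissible Gam e /\ area e = Finite a)) (5120 / INR N)).
      { intros N HN. destruct (Key N HN) as [a [Ha Hle]].
        apply Rbar_le_trans with (Finite a); [apply Hlb; exact Ha| simpl; exact Hle]. }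
      assert (H1 := Hall 1%nat ltac:(lia)).
      destruct (Glb_Rbar _) as [g| |]; simpl in H1 |- *; try tauto.
      destruct (Rle_lt_dec g 0) as [h|h]; [exact h|exfalso].
      destruct (exists_nat_between (5120 / g)) as [N [HN1 HN2]].
      { apply Rdiv_lt_0_compat; lra. }
      assert (HNp : (0 < N)%nat).
      { destruct N; [simpl in HN1; assert (0 < 5120 / g) by (apply Rdiv_lt_0_compat; lra); lra| lia]. }
      assert (H2 := Hall N HNp). simpl in H2.
      assert (HN' : 0 < INR N) by (apply lt_0_INR; exact HNp).
      assert (g * INR N <= 5120).
      { apply Rmult_le_compat_r with (r := INR N) in H2; [|lra].
        replace (5120 / INR N * INR N) with 5120 in H2 by (field; lra). exact H2. }
      assert (5120 <= g * INR N).
      { apply Rmult_le_compat_l with (r := g) in HN1; [|lra].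
        replace (g * (5120 / g)) with 5120 in HN1 by (field; lra). exact HN1. }
      (* 5120 / g <= N, need strict contradiction: use N+1 *)
      assert (H3 := Hall (S N) ltac:(lia)). rewrite S_INR in H3. simpl in H3.
      apply Rmult_le_compat_r with (r := INR N + 1) in H3; [|lra].
      replace (5120 / (INR N + 1) * (INR N + 1)) with 5120 in H3 by (field; lra).
      nra.
    - apply Hglb. intros a [e [_ Ea]]. simpl. apply (area_nonneg e a Ea). }
  unfold VEL_to_infinity, VEL. fold Gam.
  destruct excluded_middle_informative as [Hex|Hex]; [|reflexivity].
  rewrite HMOD. destruct Req_dec_T as [_|n]; [reflexivity| exfalso; apply n; reflexivity].
Qed.
End Geo.

Theorem lemma5p2 (V : Type) (adj : V -> V -> Prop) (Th : V -> V -> R)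
  (P : V -> disk) :
  simple_graph adj -> connected_graph adj ->
  edge_weight adj Th ->
  (forall u v, adj u v -> 0 <= Th u v <= PI / 2) ->
  disk_pattern P -> realizes adj Th P ->
  locally_finite P ->
  VEL_parabolic adj.
Proof.
  intros Hs Hc _ Hth Hp Hr Hl.
  exact (parabolic_main adj Th P Hth Hp Hr Hl Hs Hc).
Qed.
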